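(* Let $u\in\mathbb{N}$, $u\geq 2$, let $l_1,\dots,l_u$ be non-negative integers, and let $M:=\max\{l_j:j=1,\dots,u\}$. Then the minimal value $K$ for which there exists a well distributing matrix $\mathcal{K}\in\{0,1\}^{u\times K}$ is $$\max\Bigl\{M,\Bigl\lceil\tfrac{1}{u-1}\sum_{i=1}^u l_i\Bigr\rceil\Bigr\}.$$
   Context: Given $u,K\in\mathbb{N}$ and non-negative integers $l_1,\dots,l_u$, a matrix $\mathcal{K}\in\{0,1\}^{u\times K}$ is well distributing if (i) $\sum_{j=1}^K\mathcal{K}_{i,j}=l_i$ for all $i=1,\dots,u$, and (ii) $1\le\sum_{i=1}^u\mathcal{K}_{i,j}\le u-1$ for all $j=1,\dots,K$. *)

(* Defs.v *)
From mathcomp Require Import all_boot all_algebra.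
Set Implicit Arguments. Unset Strict Implicit. Unset Printing Implicit Defensive.

(* A 0/1 matrix is a boolean matrix 'M[bool]_(u, K); entry true = 1. *)

Definition row_sum (u K : nat) (A : 'M[bool]_(u, K)) (i : 'I_u) : nat :=
  \sum_(j < K) (A i j : nat).

Definition col_sum (u K : nat) (A : 'M[bool]_(u, K)) (j : 'I_K) : nat :=
  \sum_(i < u) (A i j : nat).

Definition well_distributing (u K : nat) (l : 'I_u -> nat) (A : 'M[bool]_(u, K)) : Prop :=
  (forall i : 'I_u, row_sum A i = l i) /\
  (forall j : 'I_K, 1 <= col_sum A j <= u - 1).

Definition ceil_div (m d : nat) : nat := (m + d.-1) %/ d.

(* Main.v *)
Require Import Defs.
From mathcomp Require Import all_boot all_algebra zify.

Lemma win_K (K j a : nat) : j < K -> \sum_(a <= p < a + K) (p %% K == j : nat) = 1.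
Proof.
move=> jK; elim: a => [|a IH].
  rewrite add0n big_mkord (bigD1 (Ordinal jK)) //= modn_small // eqxx big1 //.
  move=> i ne; rewrite modn_small //.
  have: (i : nat) != j by apply: contra ne => /eqP h; apply/eqP/val_inj.
  by move/negbTE ->.
rewrite -IH addSn.
have h1 : a <= a.+1 by [].
have h2 : a.+1 <= a + K by lia.
have h3 : a + K <= (a + K).+1 by [].
rewrite [RHS](big_cat_nat h1 h2) /= big_nat1 (big_cat_nat h2 h3) /= big_nat1.
by rewrite modnDr addnC.
Qed.

Lemma win_le (K j a n : nat) : j < K -> n <= K ->
  \sum_(a <= p < a + n) (p %% K == j : nat) <= 1.
Proof.
move=> jK nK; rewrite -(@win_K K j a jK).
have h1 : a <= a + n by rewrite leq_addr.
have h2 : a + n <= a + K by rewrite leq_add2l.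
by rewrite (big_cat_nat h1 h2) /= leq_addr.
Qed.

Lemma blocks (K j m : nat) : j < K -> \sum_(0 <= p < K * m) (p %% K == j : nat) = m.
Proof.
move=> jK; elim: m => [|m IH]; first by rewrite muln0 big_geq.
have h1 : 0 <= K * m by [].
have h2 : K * m <= K * m + K by rewrite leq_addr.
by rewrite mulnS addnC (big_cat_nat h1 h2) /= IH win_K // addn1.
Qed.

Lemma concat (f L : nat -> nat) (n : nat) :
  \sum_(i < n) \sum_(\sum_(k < i) L k <= p < \sum_(k < i) L k + L i) f p
  = \sum_(0 <= p < \sum_(i < n) L i) f p.
Proof.
elim: n => [|n IH]; first by rewrite !big_ord0 big_geq.
rewrite big_ord_recr /= IH [in RHS]big_ord_recr /=.
have h1 : 0 <= \sum_(i < n) L i by [].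
have h2 : \sum_(i < n) L i <= \sum_(i < n) L i + L n by rewrite leq_addr.
by rewrite [RHS](big_cat_nat h1 h2).
Qed.

Lemma ceil_up (S d : nat) : 0 < d -> S <= ceil_div S d * d.
Proof.
move=> d0; rewrite /ceil_div.
have := divn_eq (S + d.-1) d; have := ltn_pmod (S + d.-1) d0.
move: ((S + d.-1) %/ d * d) (((S + d.-1) %% d)) => x y; lia.
Qed.

Lemma ceil_le (S d K : nat) : 0 < d -> S <= K * d -> ceil_div S d <= K.
Proof.
move=> d0 h; rewrite /ceil_div.
have : (S + d.-1) %/ d <= (K * d + d.-1) %/ d by apply: leq_div2r; rewrite leq_add2r.
rewrite divnMDl // (@divn_small d.-1 d) ?addn0 //; lia.
Qed.

Lemma ceil_leS (S d : nat) : 0 < d -> ceil_div S d <= S.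
Proof.
move=> d0; case: S => [|S]; first by rewrite /ceil_div add0n divn_small //; lia.
apply: ceil_le => //; rewrite mulSn; have : S <= S * d by rewrite leq_pmulr. lia.
Qed.

Theorem lemma9 (u : nat) (hu : 2 <= u) (l : 'I_u -> nat) :
  let M := \max_(i < u) l i in
  let K0 := maxn M (ceil_div (\sum_(i < u) l i) (u - 1)) in
  (exists A : 'M[bool]_(u, K0), well_distributing l A) /\
  (forall (K : nat) (A : 'M[bool]_(u, K)), well_distributing l A -> K0 <= K).
Proof.
move=> M K0.
set S := \sum_(i < u) l i.
set d := u - 1.
have d0 : 0 < d by rewrite /d; lia.
have hlM : forall i, l i <= M by move=> i; exact: leq_bigmax.
have hlS : forall i, l i <= S by move=> i; rewrite /S (bigD1 i) //= leq_addr.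
have hMS : M <= S by apply/bigmax_leqP => i _; exact: hlS.
have hK0S : K0 <= S by rewrite geq_max hMS ceil_leS.
have hSK0 : S <= K0 * d.
  apply: (leq_trans (ceil_up S d d0)); rewrite leq_mul2r leq_maxr orbT //.
have hlK : forall i, l i <= K0 by move=> i; apply: (leq_trans (hlM i)); rewrite leq_maxl.
split.
  pose Lf : nat -> nat := fun k => oapp l 0 (insub k).
  have LfE : forall i : 'I_u, Lf i = l i by move=> i; rewrite /Lf valK.
  pose P k := \sum_(m < k) Lf m.
  pose f j p := (p %% K0 == j : nat).
  pose A : 'M[bool]_(u, K0) := (\matrix_(i, j) (0 < \sum_(P i <= p < P i + l i) f j p)%N)%R.
  have AE : forall i j, (A i j : nat) = \sum_(P i <= p < P i + Lf i) f j p.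
    move=> i j; rewrite mxE LfE.
    have := @win_le K0 j (P i) (l i) (ltn_ord j) (hlK i).
    by rewrite /f; case: (\sum_(_ <= _ < _) _) => [|[|]].
  exists A; split.
    move=> i; rewrite /row_sum.
    case: (posnP K0) => [K00|K0pos].
      have : l i = 0 by have := hlK i; rewrite K00; lia.
      by move=> ->; rewrite big1 // => j; have := ltn_ord j; rewrite {2}K00.
    rewrite (eq_bigr _ (fun j _ => AE i j)) exchange_big /= LfE.
    rewrite (eq_bigr (fun _ => 1)) ?sum_nat_const_nat ?muln1 ?addKn //.
    move=> p _; rewrite (bigD1 (Ordinal (ltn_pmod p K0pos))) //= /f eqxx big1 //.
    move=> j ne; have : p %% K0 != j.
      by apply: contra ne => /eqP h; apply/eqP/val_inj.
    by move/negbTE ->.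
  move=> j; rewrite /col_sum (eq_bigr _ (fun i _ => AE i j)) /P concat.
  have -> : \sum_(i < u) Lf i = S by apply: eq_bigr => i _; rewrite LfE.
  have jS : j < S by apply: (leq_trans (ltn_ord j)).
  apply/andP; split.
    have h1 : 0 <= j by [].
    have h2 : j <= S by exact: ltnW.
    rewrite (big_cat_nat h1 h2) /= (@big_cat_nat _ _ _ j.+1 j S) //= big_nat1 /f.
    by rewrite modn_small // eqxx addnCA leq_addr.
  have h1 : 0 <= S by [].
  apply: (@leq_trans (\sum_(0 <= p < K0 * d) f j p)); last by rewrite (@blocks K0 j d (ltn_ord j)).
  rewrite (big_cat_nat h1 hSK0) /=; exact: leq_addr.
move=> K A [hr hc].
have hlK2 : forall i, l i <= K.
  move=> i; rewrite -hr /row_sum.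
  apply: (@leq_trans (\sum_(j < K) 1)); last by rewrite sum1_card card_ord.
  by apply: leq_sum => j _; exact: leq_b1.
have hSK : S <= K * d.
  rewrite /S (eq_bigr _ (fun i _ => esym (hr i))) /row_sum exchange_big /=.
  apply: (@leq_trans (\sum_(j < K) d)); last by rewrite sum_nat_const card_ord.
  by apply: leq_sum => j _; have := hc j; rewrite /col_sum => /andP[].
rewrite geq_max (ceil_le _ _ _ d0 hSK) andbT.
by apply/bigmax_leqP => i _.
Qed.
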